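(* Let $N$ be a finite set with $|N|\ge2$, and let $m_1,m_2:\mathcal{P}(N)\to\mathbb{R}$ generate distinct extreme rays of the cone of standardized supermodular set functions. For $i=1,2$ let $o_i\in\mathbb{R}^{\Upsilon}$ be given by $o_i(a|B)=m_i(\{a\}\cup B)-m_i(B)$ and let $u_i$ be the common value of $\langle o_i,\eta_H\rangle$ over full graphs $H$ over $N$. Then the faces $F_i=\{\eta\in P_N:\langle o_i,\eta\rangle=u_i\}$ of $P_N$ ($i=1,2$) are inclusion-incomparable.
   Context: $\mathrm{DAG}(N)$ is the set of acyclic directed graphs over $N$; $\mathrm{pa}_G(a)$ is the parent set of $a$ in $G$. A full graph is an acyclic directed graph over $N$ in which every pair of distinct nodes is adjacent. $\Upsilon=\{(a|B): a\in N,\ \emptyset\neq B\subseteq N\setminus\{a\}\}$; $\eta_G\in\mathbb{R}^{\Upsilon}$ has $\eta_G(a|B)=1$ if $B=\mathrm{pa}_G(a)$, else $0$; $P_N=\mathrm{conv}\{\eta_G:G\in\mathrm{DAG}(N)\}$. A set function $m$ is standardized if $m(S)=0$ for $|S|\le1$, supermodular if $m(U)+m(V)\le m(U\cup V)+m(U\cap V)$ for all $U,V\subseteq N$. The standardized supermodular functions form a pointed polyhedral cone. (For a standardized supermodular $m$, the inequality $\langle o,\eta\rangle\le u$ so defined is valid on $P_N$ and tight at all full graphs.) *)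

(* Defs.v *)
From HB Require Import structures.
From mathcomp Require Import all_boot all_order all_algebra.
From mathcomp Require Import reals.
Set Implicit Arguments. Unset Strict Implicit. Unset Printing Implicit Defensive.
Import Order.TTheory GRing.Theory Num.Theory.
Local Open Scope ring_scope.

Section Defs.
Variable R : realType.
Variable N : finType.

(** A directed graph over N is given by its parent sets: [pa a] = pa_G(a). *)
Definition graph := {ffun N -> {set N}}.

Definition edge (G : graph) : rel N := fun x y => x \in G y.

Definition is_dag (G : graph) : bool :=
  [forall x, x \notin G x] &&
  [forall x, [forall y, edge G x y ==> ~~ connect (edge G) y x]].

Definition is_full (G : graph) : bool :=
  is_dag G && [forall a, [forall b, (a != b) ==> ((a \in G b) || (b \in G a))]].

Definition ups_pred (p : N * {set N}) : bool := (p.1 \notin p.2) && (p.2 != set0).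
Definition Ups := {p : N * {set N} | ups_pred p}.

Definition ups_a (k : Ups) : N := (val k).1.
Definition ups_B (k : Ups) : {set N} := (val k).2.

Definition etaG (G : graph) (k : Ups) : R :=
  if ups_B k == G (ups_a k) then 1 else 0.

Definition inner (o e : Ups -> R) : R := \sum_(k : Ups) o k * e k.

(** P_N = conv{eta_G : G in DAG(N)} (DAG(N) finite, so finite convex combos) *)
Definition in_PN (e : Ups -> R) : Prop :=
  exists lam : graph -> R,
    (forall G, 0 <= lam G) /\ (forall G, ~~ is_dag G -> lam G = 0) /\
    \sum_(G : graph | is_dag G) lam G = 1 /\
    forall k, e k = \sum_(G : graph | is_dag G) lam G * etaG G k.

Definition standardized (m : {set N} -> R) : Prop :=
  forall S : {set N}, (#|S| <= 1)%N -> m S = 0.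
Definition supermodular (m : {set N} -> R) : Prop :=
  forall U V : {set N}, m U + m V <= m (U :|: V) + m (U :&: V).
Definition std_supermod (m : {set N} -> R) : Prop :=
  standardized m /\ supermodular m.

Definition extreme_ray_gen (m : {set N} -> R) : Prop :=
  std_supermod m /\ (exists S, m S != 0) /\
  forall m1 m2 : {set N} -> R, std_supermod m1 -> std_supermod m2 ->
    (forall S, m S = m1 S + m2 S) ->
    exists c : R, 0 <= c /\ forall S, m1 S = c * m S.

Definition same_ray (m1 m2 : {set N} -> R) : Prop :=
  exists c : R, 0 < c /\ forall S, m2 S = c * m1 S.

Definition o_of (m : {set N} -> R) (k : Ups) : R :=
  m (ups_a k |: ups_B k) - m (ups_B k).

Definition face (o : Ups -> R) (u : R) (e : Ups -> R) : Prop :=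
  in_PN e /\ inner o e = u.

End Defs.

(* Main.v *)
Require Import Defs.
From HB Require Import structures.
From mathcomp Require Import all_boot all_order all_algebra.
From mathcomp Require Import reals lra ring zify.
Import Order.TTheory GRing.Theory Num.Theory.
Local Open Scope ring_scope.
Set Implicit Arguments. Unset Strict Implicit.

Lemma set_ind (T : finType) (P : {set T} -> Prop) :
  P set0 -> (forall (x : T) (A : {set T}), x \notin A -> P A -> P (x |: A)) -> forall A, P A.
Proof.
move=> P0 PS A; elim: {A}_.+1 {-2}A (ltnSn #|A|) => // n IH A hA.
case: (set_0Vmem A) => [->//|[x xA]].
have -> : A = x |: (A :\ x) by rewrite setD1K.
apply: PS; first by rewrite setD11.
apply: IH; rewrite -ltnS; apply: leq_trans hA.
by rewrite ltnS (cardsD1 x A) xA.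
Qed.

Section Sm.
Variables (R : realType) (N : finType).

Definition nondeg (t : N * N * {set N}) : bool :=
  [&& t.1.1 != t.1.2, t.1.1 \notin t.2 & t.1.2 \notin t.2].

Definition Dl (m : {set N} -> R) (t : N * N * {set N}) : R :=
  if nondeg t then m (t.1.1 |: (t.1.2 |: t.2)) + m t.2 - m (t.1.1 |: t.2) - m (t.1.2 |: t.2)
  else 0.

Lemma Dl_ge0 m : supermodular m -> forall t, 0 <= Dl m t.
Proof.
move=> sm [[a b] C]; rewrite /Dl /nondeg /=.
case: ifP => // /and3P [ab aC bC].
have := sm (a |: C) (b |: C).
have -> : (a |: C) :|: (b |: C) = a |: (b |: C).
  by apply/setP => y; rewrite !inE; case: (y == a); case: (y == b); case: (y \in C).
have -> : (a |: C) :&: (b |: C) = C.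
  apply/setP => y; rewrite !inE; case: (eqVneq y a) => [->|ya]; first by rewrite (negbTE ab) (negbTE aC).
  by case: (eqVneq y b) => [->|yb] /=; [rewrite (negbTE bC) | case: (y \in C)].
move=> h; rewrite !subr_ge0 in h *; lra.
Qed.

Lemma step1 m : (forall t, 0 <= Dl m t) ->
  forall (B : {set N}) a C, a \notin B -> m (a |: C) - m C <= m (a |: (B :|: C)) - m (B :|: C).
Proof.
move=> hD; elim/set_ind => [a C _|x B xB IH a C].
  by rewrite !set0U.
rewrite in_setU1 negb_or => /andP [ax aB].
apply: le_trans (IH a C aB) _.
rewrite -setUA.
set C' := B :|: C.
case: (boolP (x \in C')) => xC.
  have -> : x |: C' = C' by apply/setUidPr; rewrite sub1set.
  by rewrite lexx.
case: (boolP (a \in C')) => aC.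
  have -> : a |: C' = C' by apply/setUidPr; rewrite sub1set.
  have -> : a |: (x |: C') = x |: C' by apply/setUidPr; rewrite sub1set in_setU1 aC orbT.
  by rewrite !subrr.
have := hD (a, x, C'); rewrite /Dl /nondeg /= ax aC xC /= => h.
lra.
Qed.

Lemma step2 m : (forall t, 0 <= Dl m t) ->
  forall (A C D : {set N}), (forall y, y \in A -> y \notin D) ->
  m (A :|: C) - m C <= m (A :|: (D :|: C)) - m (D :|: C).
Proof.
move=> hD; elim/set_ind => [C D _|x A xA IH C D hAD].
  by rewrite !set0U !subrr.
have xD : x \notin D by apply: hAD; rewrite setU11.
have hAD' : forall y, y \in A -> y \notin D by move=> y yA; apply: hAD; rewrite inE yA orbT.
have h1 := IH C D hAD'.
have h2 := @step1 m hD D x (A :|: C) xD.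
rewrite -!setUA.
have e : D :|: (A :|: C) = A :|: (D :|: C) by rewrite setUCA.
rewrite e in h2. lra.
Qed.

Lemma elem_supermod m : (forall t, 0 <= Dl m t) -> supermodular m.
Proof.
move=> hD U V.
have := @step2 m hD (U :\: V) (U :&: V) (V :\: U).
have e1 : U :\: V :|: U :&: V = U.
  by apply/setP => y; rewrite !inE; case: (y \in U); case: (y \in V).
have e2 : V :\: U :|: U :&: V = V.
  by apply/setP => y; rewrite !inE; case: (y \in U); case: (y \in V).
have e3 : U :\: V :|: V = U :|: V.
  by apply/setP => y; rewrite !inE; case: (y \in U); case: (y \in V).
rewrite e1 e2 e3 => h.
have : m U - m (U :&: V) <= m (U :|: V) - m V.
  by apply: h => y; rewrite !inE; case: (y \in U); case: (y \in V).
lra.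
Qed.
End Sm.
Section Inner.
Variables (R : realType) (N : finType).

Lemma inner_formula (m : {set N} -> R) (G : graph N) :
  standardized m -> (forall a, a \notin G a) ->
  inner (o_of m) (etaG R G) = \sum_a (m (a |: G a) - m (G a)).
Proof.
move=> sm nl; rewrite /inner (partition_big (@ups_a N) predT) //=.
apply: eq_bigr => a _.
case: (eqVneq (G a) set0) => [G0|Gn0].
  rewrite G0 setU0 !sm ?cards1 ?cards0 // subrr.
  apply: big1 => k /eqP ka; rewrite /etaG ka G0.
  have : ups_B k != set0 by move: (valP k) => /andP [_ ->].
  by move/negbTE => ->; rewrite mulr0.
have pk : ups_pred (a, G a) by rewrite /ups_pred /= nl Gn0.
pose k0 : Ups N := exist _ (a, G a) pk.
rewrite (bigD1 k0) //= big1 ?addr0.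
  by rewrite /etaG /o_of /= eqxx mulr1.
move=> k /andP [/eqP ka kk0]; rewrite /etaG ka.
case: eqP => [kB|]; last by rewrite mulr0.
case/eqP: kk0; apply: val_inj => /=.
by case: k ka kB => [[b B] pb]; rewrite /ups_a /ups_B /= => -> ->.
Qed.

Lemma in_PN_dag (G : graph N) : is_dag G -> in_PN (etaG R G).
Proof.
move=> dG.
exists (fun H => if H == G then 1 else 0); split.
  by move=> H; case: ifP.
split.
  by move=> H; case: eqP => // -> ; rewrite dG.
split.
  by rewrite (bigD1 G) //= eqxx big1 ?addr0 // => H /andP [_ /negbTE ->].
move=> k; rewrite (bigD1 G) //= eqxx mul1r big1 ?addr0 //.
by move=> H /andP [_ /negbTE ->]; rewrite mul0r.
Qed.

Lemma dag_of_key (G : graph N) (key : N -> nat) :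
  (forall x y, x \in G y -> (key x < key y)%N) -> is_dag G.
Proof.
move=> hk; apply/andP; split.
  by apply/forallP => x; apply/negP => /hk; rewrite ltnn.
apply/forallP => x; apply/forallP => y; apply/implyP => /hk hxy.
apply/negP => /connectP [p pth xe].
have : (key y <= key (last y p))%N.
  elim: p y pth {hxy xe} => //= z p IH y /andP [/hk yz pth].
  exact: leq_trans (ltnW yz) (IH z pth).
by rewrite -xe leqNgt hxy.
Qed.

End Inner.

Lemma keylt c1 c2 r1 r2 n : (r1 < n)%N -> (r2 < n)%N ->
  (c1*n+r1 < c2*n+r2)%N = (c1 < c2)%N || ((c1 == c2) && (r1 < r2)%N).
Proof.
move=> h1 h2.
case: (ltngtP c1 c2) => h /=.
- apply/idP. have : (c1.+1 * n <= c2 * n)%N by rewrite leq_mul2r h orbT.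
  rewrite mulSn. lia.
- apply/negbTE; rewrite -leqNgt. have : (c2.+1 * n <= c1 * n)%N by rewrite leq_mul2r h orbT.
  rewrite mulSn. lia.
- subst; lia.
Qed.

Section Constr.
Variables (R : realType) (N : finType) (a b : N) (C : {set N}).
Hypotheses (hab : a != b) (aC : a \notin C) (bC : b \notin C).

Definition cls (x : N) : nat :=
  if x \in C then 0 else if x == a then 1 else if x == b then 2 else 3.
Definition key (x : N) : nat := (cls x * #|N| + enum_rank x)%N.

Lemma keyltE x y : (key y < key x)%N =
  (cls y < cls x)%N || ((cls y == cls x) && (enum_rank y < enum_rank x)%N).
Proof. by rewrite /key keylt // -cardE ltn_ord. Qed.

Lemma key_inj x y : key x = key y -> x = y.
Proof.
move=> e.
have h1 := keyltE x y; have h2 := keyltE y x.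
rewrite e ltnn in h1 h2.
case: (ltngtP (cls x) (cls y)) => [lt|gt|ec].
- by rewrite lt in h2.
- by rewrite gt in h1.
rewrite ec eqxx ltnn /= in h1 h2.
apply: enum_rank_inj; apply: val_inj.
case: (ltngtP (enum_rank x : nat) (enum_rank y)) => [lt|gt|//].
- by rewrite lt in h2.
- by rewrite gt in h1.
Qed.

Definition Hg : graph N := [ffun x => [set y | (key y < key x)%N]].
Definition Gg : graph N := [ffun x => if x == b then C else [set y | (key y < key x)%N]].

Lemma clsb : cls b = 2%N.
Proof. by rewrite /cls (negbTE bC) eq_sym (negbTE hab) eqxx. Qed.

Lemma Hb : Hg b = a |: C.
Proof.
apply/setP => y; rewrite ffunE !inE keyltE clsb.
rewrite /cls; case: (boolP (y \in C)) => yC; first by rewrite orbT.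
case: (eqVneq y a) => ya //=; case: (eqVneq y b) => yb //=.
by rewrite yb ltnn.
Qed.

Lemma H_full : is_full Hg.
Proof.
apply/andP; split.
  by apply: (@dag_of_key _ _ key) => x y; rewrite ffunE inE.
apply/forallP => x; apply/forallP => y; apply/implyP => xy.
rewrite !ffunE !inE; case: (ltngtP (key x) (key y)) => //= e.
by move: xy; rewrite (key_inj e) eqxx.
Qed.

Lemma G_dag : is_dag Gg.
Proof.
apply: (@dag_of_key _ _ key) => x y; rewrite ffunE.
case: (eqVneq y b) => [->|_]; last by rewrite inE.
by move=> xC; rewrite keyltE clsb /cls xC.
Qed.

Lemma noloop (G : graph N) : is_dag G -> forall x, x \notin G x.
Proof. by case/andP => /forallP. Qed.

Lemma inner_diff (m : {set N} -> R) : standardized m ->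
  inner (o_of m) (etaG R Hg) - inner (o_of m) (etaG R Gg) = Dl m (a, b, C).
Proof.
move=> sm.
have nlG := noloop G_dag.
have nlH : forall x, x \notin Hg x by apply: noloop; case/andP: H_full.
rewrite !inner_formula //.
rewrite (bigD1 b) //= [X in _ - X](bigD1 b) //=.
rewrite (eq_bigr (fun x => m (x |: Gg x) - m (Gg x))); last first.
  by move=> x xb; rewrite !ffunE (negbTE xb).
rewrite Hb {2}/Gg ffunE eqxx /Dl /nondeg /= hab aC bC /=.
rewrite setUCA. lra.
Qed.

End Constr.

Section Main.
Variables (R : realType) (N : finType).

Lemma Dl_lin (m m' : {set N} -> R) e t :
  Dl (fun S => m S - e * m' S) t = Dl m t - e * Dl m' t.
Proof. by rewrite /Dl; case: ifP => _; [ring | rewrite mulr0 subr0]. Qed.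

Lemma ray_of_zero (m m' : {set N} -> R) :
  extreme_ray_gen m -> extreme_ray_gen m' ->
  (forall t, Dl m t = 0 -> Dl m' t = 0) -> same_ray m m'.
Proof.
move=> [[sm smm] [_ ext]] [[sm' smm'] [[S0 hS0] _]] hz.
pose F t := if 0 < Dl m t then Dl m t / (`|Dl m' t| + 1) else 1.
pose eps := \big[Order.min/1]_t F t.
have Fpos t : 0 < F t.
  rewrite /F; case: ifP => // h; apply: divr_gt0 => //.
  by apply: ltr_pwDr => //; rewrite normr_ge0.
have epos : 0 < eps by apply/bigmin_gtP; split => // i _; exact: Fpos.
have epsF t : eps <= F t by exact: bigmin_le.
have [] := ext (fun S => eps * m' S) (fun S => m S - eps * m' S).
- split; first by move=> S hS; rewrite sm' // mulr0.
  move=> U V; have := smm' U V; nra.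
- split; first by move=> S hS; rewrite sm // sm' // mulr0 subr0.
  apply: elem_supermod => t; rewrite Dl_lin.
  have := Dl_ge0 smm t; rewrite le_eqVlt => /orP [/eqP h0|hp].
    by rewrite -h0 hz // mulr0 subr0.
  have := epsF t; rewrite /F hp ler_pdivlMr; last first.
    by apply: ltr_pwDr => //; rewrite normr_ge0.
  have := ler_norm (Dl m' t); nra.
- by move=> S; ring.
move=> c [c0 hc].
have epsn0 : eps != 0 by rewrite gt_eqF.
have cn0 : c != 0.
  apply/eqP => c00; move: (hc S0); rewrite c00 mul0r => /eqP.
  by rewrite mulf_eq0 (negbTE epsn0) (negbTE hS0).
exists (c / eps); split; first by rewrite divr_gt0 // lt_def cn0 c0.
move=> S; rewrite -[m' S](mulKf epsn0) hc.
by rewrite mulrA [eps^-1 * c]mulrC.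
Qed.

Lemma same_ray_sym (m m' : {set N} -> R) : same_ray m' m -> same_ray m m'.
Proof.
move=> [c [c0 h]]; exists c^-1; split; first by rewrite invr_gt0.
by move=> S; rewrite h mulKf // gt_eqF.
Qed.

Lemma incl_zero (m m' : {set N} -> R) (u u' : R) :
  standardized m -> standardized m' ->
  (forall H : graph N, is_full H -> inner (o_of m) ((etaG R H)) = u) ->
  (forall H : graph N, is_full H -> inner (o_of m') ((etaG R H)) = u') ->
  (forall e, face (o_of m) u e -> face (o_of m') u' e) ->
  forall t, Dl m t = 0 -> Dl m' t = 0.
Proof.
move=> sm sm' hu hu' inc [[a b] C].
case nd: (nondeg (a, b, C)); last by rewrite /Dl nd.
move: (nd); rewrite /nondeg /= => /and3P [hab aC bC] h0.
have Hf : is_full (Hg a b C) by apply: H_full.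
have Gd : is_dag (Gg a b C) by apply: G_dag.
have d : inner (o_of m) (etaG R (Hg a b C)) - inner (o_of m) (etaG R (Gg a b C)) = Dl m (a, b, C)
  by apply: inner_diff.
have d' : inner (o_of m') (etaG R (Hg a b C)) - inner (o_of m') (etaG R (Gg a b C)) = Dl m' (a, b, C)
  by apply: inner_diff.
rewrite (hu _ Hf) in d.
rewrite (hu' _ Hf) in d'.
have [_ e'] : face (o_of m') u' (etaG R (Gg a b C)).
  apply: inc; split; first exact: in_PN_dag.
  lra.
rewrite -d' e'. lra.
Qed.

End Main.

Theorem lemma8 (R : realType) (N : finType) (hN : (1 < #|N|)%N)
  (m1 m2 : {set N} -> R) (u1 u2 : R) :
  extreme_ray_gen m1 -> extreme_ray_gen m2 -> ~ same_ray m1 m2 ->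
  (forall H : graph N, is_full H -> inner (o_of m1) ((etaG R H)) = u1) ->
  (forall H : graph N, is_full H -> inner (o_of m2) ((etaG R H)) = u2) ->
  ~ (forall e, face (o_of m1) u1 e -> face (o_of m2) u2 e) /\
  ~ (forall e, face (o_of m2) u2 e -> face (o_of m1) u1 e).
Proof.
move=> e1 e2 nr h1 h2.
have s1 : standardized m1 by case: e1 => [[]].
have s2 : standardized m2 by case: e2 => [[]].
split => inc.
  exact: nr (ray_of_zero e1 e2 (incl_zero s1 s2 h1 h2 inc)).
exact: nr (same_ray_sym (ray_of_zero e2 e1 (incl_zero s2 s1 h2 h1 inc))).
Qed.
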